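(* Let $1\le m<n$ be integers and let $c_1,\dots,c_m$ be non-negative integers satisfying $c_1+2c_2+\cdots+mc_m\le n-m-1$. Let $\pi\in S_n$ be chosen uniformly at random, and let $c_i(\pi)$ denote the number of cycles of length $i$ in $\pi$. Then \[ \frac{1}{(2m+2)\prod_{i=1}^m c_i!\, i^{c_i}} \le \mathbb{P}\big(c_1(\pi)=c_1,\dots,c_m(\pi)=c_m\big) \le \frac{1}{(m+1)\prod_{i=1}^m c_i!\, i^{c_i}}. \]
   Context: $S_n$ is the symmetric group on $\{1,\dots,n\}$. *)

(* Defs.v *)
From mathcomp Require Import all_boot all_order all_algebra all_fingroup.
Set Implicit Arguments. Unset Strict Implicit. Unset Printing Implicit Defensive.

(* Number of cycles of length i of a permutation s of 'I_n
   (cycles = orbits of <[s]>, including fixed points as 1-cycles). *)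
Definition ncycles (n : nat) (s : {perm 'I_n}) (i : nat) : nat :=
  #|[set C in porbits s | #|C| == i]|.

Definition cycle_event (n m : nat) (c : nat -> nat) : {set {perm 'I_n}} :=
  [set s : {perm 'I_n} | [forall i : 'I_m, ncycles s i.+1 == c i.+1]].

Definition unif_prob (n : nat) (A : {set {perm 'I_n}}) : rat :=
  (#|A|%:R / #|{perm 'I_n}|%:R)%R.

(* Main.v *)
Require Import Defs.
From mathcomp Require Import all_boot all_order all_algebra all_fingroup zify ring lra.
Import GRing.Theory Num.Theory.
Set Implicit Arguments. Unset Strict Implicit. Unset Printing Implicit Defensive.

Section Orb.
Variable T : finType.
Implicit Types (s u : {perm T}) (B : {set T}) (x y z w : T).

Lemma porbit_closed s B z : (forall w, w \in B -> s w \in B) -> z \in B ->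
  porbit s z \subset B.
Proof.
move=> hB hz; apply/subsetP => w /porbitP [i ->].
elim: i => [|i IH]; first by rewrite expg0 perm1.
by rewrite expgSr permM; apply: hB.
Qed.

Lemma porbit_step s z w : w \in porbit s z -> s w \in porbit s z.
Proof.
move=> hw; have <- : porbit s w = porbit s z by apply/eqP; rewrite eq_porbit_mem.
by rewrite -{1}[s]expg1 mem_porbit.
Qed.

Lemma porbit_agree s u z : (forall w, w \in porbit s z -> u w = s w) ->
  porbit u z = porbit s z.
Proof.
move=> h.
have sub1 : porbit u z \subset porbit s z.
  by apply: porbit_closed (porbit_id _ _) => w hw; rewrite h // porbit_step.
apply/eqP; rewrite eqEsubset sub1 /=.
apply: porbit_closed (porbit_id _ _) => w hw.
by rewrite -h ?porbit_step // (subsetP sub1).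
Qed.

Lemma porbit_s s z : porbit s (s z) = porbit s z.
Proof. by have := porbit_perm s 1 z; rewrite expg1. Qed.

Lemma mem_porbit_s s z : s z \in porbit s z.
Proof. by have := mem_porbit s 1 z; rewrite expg1. Qed.

Lemma porbit_fix s x : s x = x -> porbit s x = [set x].
Proof.
move=> hx; apply/eqP; rewrite eqEsubset sub1set porbit_id andbT.
by apply: porbit_closed; [move=> w; rewrite !inE => /eqP ->; rewrite hx|rewrite inE].
Qed.

Section Ins.
Variables (s : {perm T}) (x y : T).
Hypothesis sx : s x = x.
Hypothesis xy : x != y.
Let u := (tperm x y * s)%g.

Lemma uE w : u w = s (tperm x y w).
Proof. by rewrite /u permM. Qed.

Lemma x_notin : x \notin porbit s y.
Proof. by rewrite porbit_sym porbit_fix // inE eq_sym. Qed.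

Lemma porbit_ins_x : porbit u x = x |: porbit s y.
Proof.
apply/eqP; rewrite eqEsubset; apply/andP; split.
  apply: porbit_closed; last by rewrite setU11.
  move=> w; rewrite !inE uE => /orP[/eqP ->|hw].
    by rewrite tpermL porbit_step ?porbit_id ?orbT.
  have wx : w != x by apply: contraNneq x_notin => <-.
  case: (eqVneq w y) => [->|wy]; first by rewrite tpermR sx eqxx.
  by rewrite tpermD 1?eq_sym // porbit_step ?orbT.
rewrite subUset sub1set porbit_id /=.
have hsy : s y \in porbit u x by rewrite -(tpermL x y) -uE porbit_step ?porbit_id.
suff : porbit s (s y) \subset porbit s y :&: porbit u x.
  by rewrite porbit_s subsetI => /andP[].
apply: porbit_closed; last by rewrite inE hsy mem_porbit_s.
move=> w; rewrite !inE => /andP[hw hw']; rewrite porbit_step //=.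
case: (eqVneq w y) => [->|wy]; first by [].
have wx : w != x by apply: contraNneq x_notin => <-.
by rewrite -(@tpermD _ x y w) 1?eq_sym // -uE porbit_step.
Qed.

Lemma porbit_ins_in z : z \in x |: porbit s y -> porbit u z = x |: porbit s y.
Proof.
move=> hz; rewrite -porbit_ins_x; apply/eqP; rewrite eq_porbit_mem porbit_ins_x //.
Qed.

Lemma porbit_ins_out z : z \notin x |: porbit s y -> porbit u z = porbit s z.
Proof.
rewrite inE negb_or => /andP[zx zy]; apply: porbit_agree => w hw.
have wy : w != y.
  by apply: contraNneq zy => ey; rewrite porbit_sym -ey.
have wx : w != x.
  apply: contraNneq zx => ex; move: hw; rewrite ex porbit_sym porbit_fix // inE.
by rewrite uE tpermD 1?eq_sym.
Qed.

End Ins.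
End Orb.


Section PC.
Variable T : finType.
Implicit Types (s u : {perm T}) (A B : {set T}) (x y z w : T).

Definition pc s A i := #|[set z in A | #|porbit s z| == i]|.

Lemma card_split_const A B (Q : T -> bool) b :
  B \subset A -> (forall z, z \in B -> Q z = b) ->
  #|[set z in A | Q z]| = b * #|B| + #|[set z in A :\: B | Q z]|.
Proof.
move=> sBA hQ; rewrite -(cardsID B [set z in A | Q z]); congr (_ + _).
  case: b hQ => hQ.
    rewrite mul1n; apply: eq_card => z; rewrite !inE.
    by case hz: (z \in B); rewrite ?andbF // hQ // (subsetP sBA).
  rewrite mul0n; apply/eqP; rewrite cards_eq0; apply/eqP/setP => z; rewrite !inE.
  by case hz: (z \in B); rewrite ?andbF // hQ // andbF.
by apply: eq_card => z; rewrite !inE andbA.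
Qed.

Lemma perm_on_fix A x s : perm_on (A :\ x) s -> s x = x.
Proof. by move=> h; apply: (out_perm h); rewrite !inE eqxx. Qed.

Lemma pc_ins_x A x s i : x \in A -> perm_on (A :\ x) s ->
  pc s A i = pc s (A :\ x) i + (i == 1)%N.
Proof.
move=> xA hs; rewrite /pc (@card_split_const A [set x] _ (i == 1)%N).
- by rewrite cards1 muln1 addnC.
- by rewrite sub1set.
- by move=> z; rewrite inE => /eqP ->; rewrite porbit_fix ?cards1 1?eq_sym //; exact: perm_on_fix hs.
Qed.

Lemma pc_ins_y A x y s i : x \in A -> perm_on (A :\ x) s -> y \in A :\ x ->
  let l := #|porbit s y| in
  pc (tperm x y * s)%g A i + (l == i) * l = pc s (A :\ x) i + (l.+1 == i) * l.+1.
Proof.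
move=> xA hs yA' l.
have sx := perm_on_fix hs.
have xy : x != y by move: yA'; rewrite !inE eq_sym => /andP[].
have PA : porbit s y \subset A :\ x.
  by apply: porbit_closed yA' => w hw; rewrite (perm_closed _ hs).
have xP := x_notin sx xy.
rewrite /pc (@card_split_const A (x |: porbit s y) _ (l.+1 == i)); last first.
- by move=> z hz; rewrite porbit_ins_in // cardsU1 xP.
- by rewrite subUset sub1set xA (subset_trans PA) // subD1set.
rewrite (@card_split_const (A :\ x) (porbit s y) _ (l == i)) //; last first.
  by move=> z hz; have -> : porbit s z = porbit s y by apply/eqP; rewrite eq_porbit_mem.
have -> : [set z in A :\: (x |: porbit s y) | #|porbit (tperm x y * s)%g z| == i]
   = [set z in A :\ x :\: porbit s y | #|porbit s z| == i].
  apply/setP => z; rewrite !inE.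
  case: (eqVneq z x) => [->|zx] /=; first by rewrite andbF.
  case hz: (z \in porbit s y) => //=.
  by rewrite porbit_ins_out // !inE negb_or zx hz.
rewrite cardsU1 xP /= -/l; lia.
Qed.

End PC.


Section Bij.
Variable T : finType.
Implicit Types (s u : {perm T}) (A B : {set T}) (x y z w : T).

Lemma perm_on_D1 A x s : perm_on A s -> s x = x -> perm_on (A :\ x) s.
Proof.
move=> /subsetP h sx; apply/subsetP => z; rewrite inE => hz; rewrite !inE.
apply/andP; split; last by rewrite h ?inE. 
by apply/eqP => ezx; move: hz; rewrite ezx sx eqxx.
Qed.

Lemma decomp A x (F : {perm T} -> nat) : x \in A ->
  \sum_(s | perm_on A s) F s =
  \sum_(y in A) \sum_(s' | perm_on (A :\ x) s') F (tperm x y * s')%g.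
Proof.
move=> xA.
pose h (p : T * {perm T}) := (tperm x p.1 * p.2)%g.
pose h' (s : {perm T}) := (s^-1%g x, (tperm x (s^-1%g x) * s)%g).
rewrite (reindex_onto h h'); last by move=> s _; rewrite /h /= tpermKg.
rewrite pair_big /=; apply: eq_big => [[y s']|[y s'] _] //=.
rewrite /h /h' /=.
apply/idP/idP.
- case/andP=> hon /eqP [e1 e2].
  have sx : s' x = x.
    move: e1; rewrite invMg permM tpermV.
    case: (eqVneq (s'^-1%g x) x) => [h0 _| hne].
      by rewrite -{1}h0 permKV.
    case: tpermP => [e0|e0 e|e0 e0' e]; first by rewrite e0 eqxx in hne.
      by rewrite e0 e eqxx in hne.
    by rewrite e in e0'.
  have yA : y \in A.
    apply: contraT => yA; have := out_perm hon yA.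
    rewrite permM tpermR sx => yx; rewrite -yx xA in yA; by [].
  rewrite yA /=; apply: perm_on_D1 sx.
  rewrite -(tpermKg x y s'); apply: perm_onM => //.
  by apply: subset_trans (tperm_on x y) _; rewrite subUset !sub1set xA yA.
- case/andP=> yA hs'.
  have sx := perm_on_fix hs'.
  have sVx : s'^-1%g x = x by rewrite -{1}sx permK.
  apply/andP; split.
    apply: perm_onM.
      by apply: subset_trans (tperm_on x y) _; rewrite subUset !sub1set xA yA.
    by apply: subset_trans hs' _; rewrite subD1set.
  by rewrite invMg permM sVx tpermV tpermL tpermKg.
Qed.

End Bij.


Lemma sum_sel k v (H : nat -> nat) :
  \sum_(1 <= l < k.+1) (v == l) * H l = ((0 < v) && (v <= k)) * H v.
Proof.
elim: k => [|k IH]; first by rewrite big_geq //; case: v => [|[]].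
rewrite big_nat_recr //= IH; case: (eqVneq v k.+1) => [->|ne].
  by rewrite ltnn andbF /= leqnn mul0n add0n /= mul1n.
rewrite mul0n addn0; congr (_ * _); congr nat_of_bool.
by rewrite [(v <= k.+1)%N]leq_eqVlt (negbTE ne) ltnS.
Qed.

Section Rec.
Variable T : finType.
Variable m : nat.
Hypothesis m0 : (0 < m)%N.
Implicit Types (s u : {perm T}) (A B : {set T}) (x y z w : T) (c : nat -> nat).

Definition ev s A c := [forall i : 'I_m, pc s A i.+1 == i.+1 * c i.+1].
Definition E A c := \sum_(s | perm_on A s) (ev s A c : nat).
Definition cdec1 c i := if i == 1 then (c i).-1 else c i.
Definition cupd c l i := if i == l then (c i).+1 else if i == l.+1 then (c i).-1 else c i.
Definition kc c := \sum_(1 <= i < m.+1) i * c i.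
Definition G s A c l :=
  [forall i : 'I_m, pc s A i.+1 + (l.+1 == i.+1) * l.+1 == i.+1 * c i.+1 + (l == i.+1) * l].

Lemma card_sum A (P : pred T) : #|[set y in A | P y]| = \sum_(y in A) (P y : nat).
Proof.
rewrite -sum1_card [LHS]big_mkcond [RHS]big_mkcond /=.
apply: eq_bigr => y _; rewrite !inE; by case: (y \in A); case: (P y).
Qed.

Lemma ev_pc s A c l : ev s A c -> (0 < l <= m)%N -> pc s A l = l * c l.
Proof.
move=> /forallP h /andP[l0 lm].
have lm' : (l.-1 < m)%N by lia.
have := h (Ordinal lm'); rewrite /= prednK //; by move/eqP.
Qed.

Lemma ev_x A x s c : x \in A -> perm_on (A :\ x) s ->
  ev s A c = (0 < c 1) && ev s (A :\ x) (cdec1 c).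
Proof.
move=> xA hs; rewrite /ev; apply/forallP/andP.
- move=> h; have h0 := h (Ordinal m0); rewrite /= (pc_ins_x _ xA hs) in h0.
  have c1 : (0 < c 1)%N by move: h0 => /eqP; rewrite eqxx /=; lia.
  split => //; apply/forallP => i; have := h i; rewrite (pc_ins_x _ xA hs) /cdec1.
  case: (nat_of_ord i) => [|j] /=; move/eqP => e; apply/eqP; lia.
- case=> c1 /forallP h i; have := h i; rewrite (pc_ins_x _ xA hs) /cdec1.
  case: (nat_of_ord i) => [|j] /=; move/eqP => e; apply/eqP; lia.
Qed.

Lemma ev_y A x y s c : x \in A -> perm_on (A :\ x) s -> y \in A :\ x ->
  ev (tperm x y * s)%g A c = G s (A :\ x) c #|porbit s y|.
Proof.
move=> xA hs yA; apply: eq_forallb => i.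
have := pc_ins_y i.+1 xA hs yA => /= H.
apply/idP/idP => /eqP e; apply/eqP; lia.
Qed.

Lemma G_big s A c l : (m < l)%N -> G s A c l = ev s A c.
Proof.
move=> ml; apply: eq_forallb => i.
have -> : (l.+1 == i.+1) = false by apply/eqP; have := ltn_ord i; lia.
have -> : (l == i.+1) = false by apply/eqP; have := ltn_ord i; lia.
by rewrite !addn0.
Qed.

Lemma num_step p l j cj : (0 < j)%N ->
  (p + (l.+1 == j) * l.+1 == j * cj + (l == j) * l) =
  ((j == l.+1) ==> (0 < cj)) &&
  (p == j * (if j == l then cj.+1 else if j == l.+1 then cj.-1 else cj)).
Proof.
move=> j0; case: (eqVneq j l) => [e1|n1]; case: (eqVneq j l.+1) => [e2|n2];
  case: (eqVneq l.+1 j)=>[e3|n3]; case: (eqVneq l j) => [e4|n4]; rewrite /=;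
  try (exfalso; lia).
- by rewrite mul0n mul1n addn0; apply/eqP/eqP; lia.
- rewrite mul1n mul0n addn0; apply/idP/idP.
    by move/eqP => e; apply/andP; split; [|apply/eqP]; nia.
  by case/andP => h /eqP e; apply/eqP; nia.
- by rewrite !mul0n !addn0.
Qed.

Lemma G_small s A c l : (0 < l <= m)%N ->
  G s A c l = ((l < m) ==> (0 < c l.+1)) && ev s A (cupd c l).
Proof.
move=> /andP[l0 lm]; rewrite /G /ev.
rewrite (eq_forallb (fun i : 'I_m => num_step (pc s A i.+1) l (c i.+1) (ltn0Sn i))).
apply/forallP/andP.
- move=> h; split.
    apply/implyP => llm; have := h (Ordinal llm); by case/andP; rewrite /= eqxx.
  by apply/forallP => i; case/andP: (h i).
- case=> side /forallP h i; apply/andP; split; last exact: h i.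
  apply/implyP => /eqP [el]; rewrite el; apply: (implyP side).
  by rewrite -el.
Qed.

Lemma sum_group A s (H : nat -> nat) :
  \sum_(y in A) H #|porbit s y| =
  \sum_(1 <= l < m.+1) pc s A l * H l
  + \sum_(y in A) (m < #|porbit s y|) * H #|porbit s y|.
Proof.
have e y : H #|porbit s y| = \sum_(1 <= l < m.+1) (#|porbit s y| == l) * H l
   + (m < #|porbit s y|) * H #|porbit s y|.
  rewrite sum_sel; have := card_porbit_neq0 s y; case: (#|porbit s y|) => [|v] // _ /=.
  by case: (leqP v.+1 m) => /= _; rewrite ?mul1n ?mul0n ?add0n ?addn0.
rewrite (eq_bigr _ (fun y _ => e y)) big_split /=; congr (_ + _).
rewrite exchange_big /=; apply: eq_bigr => l _.
by rewrite /pc card_sum big_distrl /=; apply: eq_bigr => y _.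
Qed.

Lemma card_big A s : #|[set y in A | m < #|porbit s y|]| =
  #|A| - \sum_(1 <= l < m.+1) pc s A l.
Proof.
have h := sum_group A s (fun _ => 1).
have e1 : \sum_(y in A) 1 = #|A| := sum1_card _.
have e2 : \sum_(1 <= l < m.+1) pc s A l * 1 = \sum_(1 <= l < m.+1) pc s A l.
  by apply: eq_bigr => l _; rewrite muln1.
have e3 : \sum_(y in A) (m < #|porbit s y|) * 1 = #|[set y in A | m < #|porbit s y|]|.
  by rewrite card_sum; apply: eq_bigr => y _; rewrite muln1.
by rewrite /= e1 e2 e3 in h; rewrite h addKn.
Qed.

Lemma E_rec A x c : x \in A ->
  E A c = (0 < c 1) * E (A :\ x) (cdec1 c)
   + \sum_(1 <= l < m.+1) ((l < m) ==> (0 < c l.+1)) * (l * (c l).+1) * E (A :\ x) (cupd c l)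
   + (#|A :\ x| - kc c) * E (A :\ x) c.
Proof.
move=> xA; rewrite /E (decomp _ xA) exchange_big /=.
set A' := A :\ x.
have inner : forall s', perm_on A' s' ->
   \sum_(y in A) (ev (tperm x y * s')%g A c : nat) =
   (0 < c 1) * ev s' A' (cdec1 c)
   + \sum_(1 <= l < m.+1) ((l < m) ==> (0 < c l.+1)) * (pc s' A' l * ev s' A' (cupd c l))
   + (#|A'| - \sum_(1 <= l < m.+1) pc s' A' l) * ev s' A' c.
  move=> s' hs'; rewrite (bigD1 x) //= tperm1 mul1g (ev_x _ xA hs').
  rewrite -addnA; congr (_ + _); first by case: (0 < c 1); rewrite /= ?mul1n ?mul0n.
  rewrite (eq_bigl (fun y => y \in A')); last by move=> y; rewrite !inE andbC.
  rewrite (eq_bigr (fun y => G s' A' c #|porbit s' y| : nat)); last first.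
    by move=> y hy; rewrite (ev_y _ xA hs' hy).
  rewrite (sum_group _ _ (fun l => (G s' A' c l : nat))); congr (_ + _).
    apply: eq_big_nat => l hl; rewrite G_small //.
    by case: (_ ==> _); case: ev; rewrite /= ?muln0 ?muln1 ?mul0n ?mul1n.
  rewrite -card_big card_sum big_distrl /=; apply: eq_bigr => y hy.
  by case: (ltnP m #|porbit s' y|) => h /=; rewrite ?mul0n // G_big.
rewrite (eq_bigr _ inner) !big_split /=; congr (_ + _ + _).
- by rewrite big_distrr.
- rewrite exchange_big /=; apply: eq_big_nat => l hl.
  rewrite -mulnA -big_distrr /=; congr (_ * _); rewrite big_distrr /=.
  apply: eq_bigr => s' hs'; case he: (ev s' A' (cupd c l)); rewrite ?muln0 //.
  by rewrite (ev_pc he) // /cupd eqxx.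
- rewrite big_distrr /=; apply: eq_bigr => s' hs'; case he: (ev s' A' c); rewrite ?muln0 //.
  congr ((_ - _) * _); apply: eq_big_nat => l hl; exact: ev_pc.
Qed.

End Rec.


Section Alg.
Variable m : nat.
Hypothesis m0 : (0 < m)%N.
Implicit Types (c b : nat -> nat).
Local Open Scope ring_scope.

Definition Zc c := (\prod_(1 <= i < m.+1) ((c i)`! * i ^ (c i)))%N.

Lemma Zc_gt0 c : (0 < Zc c)%N.
Proof.
rewrite /Zc big_seq; apply: prodn_cond_gt0 => i; rewrite mem_index_iota => /andP[i0 _].
by rewrite muln_gt0 fact_gt0 expn_gt0 i0.
Qed.

Lemma upd_kZ j b b' : (0 < j <= m)%N -> b' j = (b j).+1 ->
  (forall i, (0 < i <= m)%N -> i != j -> b' i = b i) ->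
  kc m b' = (kc m b + j)%N /\ Zc b' = (Zc b * ((b j).+1 * j))%N.
Proof.
move=> hj ej ho.
have mem : j \in index_iota 1 m.+1 by rewrite mem_index_iota; lia.
have U : uniq (index_iota 1 m.+1) by apply: iota_uniq.
rewrite /kc /Zc !(bigD1_seq j) //=.
have e1 : (\sum_(i <- index_iota 1 m.+1 | i != j) i * b' i =
          \sum_(i <- index_iota 1 m.+1 | i != j) i * b i)%N.
  rewrite big_seq_cond [RHS]big_seq_cond; apply: eq_bigr => i /andP[hi hij].
  by rewrite ho //; move: hi; rewrite mem_index_iota; lia.
have e2 : (\prod_(i <- index_iota 1 m.+1 | i != j) ((b' i)`! * i ^ b' i) =
          \prod_(i <- index_iota 1 m.+1 | i != j) ((b i)`! * i ^ b i))%N.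
  rewrite big_seq_cond [RHS]big_seq_cond; apply: eq_bigr => i /andP[hi hij].
  by rewrite ho //; move: hi; rewrite mem_index_iota; lia.
rewrite e1 e2 ej; split; first lia.
rewrite factS expnS; ring.
Qed.

Fixpoint dfun (f M : nat) {struct f} : rat :=
  match f with
  | 0 => 1
  | f'.+1 => match M with
             | 0 => 1
             | M'.+1 => (M'%:R * dfun f' M' + (if (m <= M')%N then dfun f' (M' - m) else 0))
                        / (M'.+1)%:R
             end
  end.

Lemma dfun_SS f M : dfun f.+1 M.+1 =
  (M%:R * dfun f M + (if (m <= M)%N then dfun f (M - m) else 0)) / (M.+1)%:R.
Proof. by []. Qed.

Lemma dfun_S f M : (M <= f)%N -> dfun f.+1 M = dfun f M.
Proof.
elim: f M => [|f IH] [|M] // hM; try by exfalso; lia.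
rewrite dfun_SS [in RHS]dfun_SS !IH //; lia.
Qed.

Lemma dfun_ge f M : (M <= f)%N -> dfun f M = dfun M M.
Proof.
elim: f => [|f IH] hM; first by case: M hM.
case: (eqVneq M f.+1) => [-> //|ne].
by rewrite dfun_S ?IH //; lia.
Qed.

Definition d M := dfun M M.

Lemma d0 : d 0 = 1. Proof. by []. Qed.

Lemma d_rec M : d M.+1 * M.+1%:R = M%:R * d M + (if (m <= M)%N then d (M - m) else 0).
Proof.
rewrite /d /= divfK ?pnatr_eq0 //.
by case: ifP => // hm; rewrite (@dfun_ge M (M - m)) //; lia.
Qed.

Definition dd N K := if (K <= N)%N then d (N - K) else 0.

Lemma dd_S N K : dd N.+1 K.+1 = dd N K.
Proof. by rewrite /dd ltnS subSS. Qed.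

Lemma dd_rec N K : N.+1%:R * dd N.+1 K = K%:R * dd N.+1 K + dd N (K + m) + (N - K)%:R * dd N K.
Proof.
rewrite /dd; case: (leqP K N) => hKN.
  have -> : (K <= N.+1)%N by lia.
  have -> : (K + m <= N)%N = (m <= N - K)%N by lia.
  have -> : (N.+1 - K = (N - K).+1)%N by lia.
  have -> : (N - (K + m) = N - K - m)%N by lia.
  have NK : N.+1 = (K + (N - K).+1)%N by lia.
  rewrite {1}NK natrD mulrDl [_.+1%:R * _]mulrC d_rec.
  case: ifP => _; ring.
case: (eqVneq K N.+1) => [->|ne].
  rewrite leqnn subnn (_ : (N.+1 + m <= N)%N = false); last by lia.
  rewrite (_ : (N - N.+1)%N = 0%N); last by lia.
  by rewrite d0 !mulr1 mul0r !addr0.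
rewrite (_ : (K <= N.+1)%N = false); last by lia.
rewrite (_ : (K + m <= N)%N = false); last by lia.
by rewrite !mulr0 !addr0.
Qed.

Definition F N c := (N`!)%:R / (Zc c)%:R * dd N (kc m c).

Lemma n1 (k : nat) : (1 + k%:R != 0 :> rat).
Proof. by rewrite addrC natr1 pnatr_eq0. Qed.

Lemma Zc_neq0 c : (Zc c)%:R != 0 :> rat.
Proof. by rewrite pnatr_eq0 -lt0n Zc_gt0. Qed.

Lemma term0 N c : (0 < c 1)%:R * F N (cdec1 c) =
  (c 1)%:R * ((N`!)%:R / (Zc c)%:R) * dd N.+1 (kc m c).
Proof.
case e: (c 1) => [|a]; first by rewrite !mul0r.
have [hk hz] := @upd_kZ 1 (cdec1 c) c (ltac:(lia)) (ltac:(by rewrite /cdec1 /= e))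
  (fun i _ (h : i != 1%N) => ltac:(by rewrite /cdec1 (negbTE h))).
rewrite /F hk hz addn1 dd_S /cdec1 /= e /= natrM.
have := Zc_neq0 (cdec1 c); rewrite /cdec1 => hz0.
rewrite mul1r; field; by rewrite hz0 andbT addrC natr1 pnatr_eq0.
Qed.

Lemma terml N c l : (0 < l < m)%N ->
  ((((l < m) ==> (0 < c l.+1)) * (l * (c l).+1))%N)%:R * F N (cupd c l) =
  (l.+1 * c l.+1)%:R * ((N`!)%:R / (Zc c)%:R) * dd N.+1 (kc m c).
Proof.
move=> /andP[l0 lm]; rewrite lm /=.
case e: (c l.+1) => [|a]; first by rewrite muln0 !mul0r.
pose b := fun i => if i == l.+1 then (c i).-1 else c i.
have [hk1 hz1] := @upd_kZ l.+1 b c (ltac:(lia)) (ltac:(by rewrite /b eqxx e))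
  (fun i _ (h : i != l.+1) => ltac:(by rewrite /b (negbTE h))).
have bl : b l = c l by rewrite /b (_ : (l == l.+1) = false) //; apply/eqP; lia.
have [hk2 hz2] := @upd_kZ l b (cupd c l) (ltac:(lia)) (ltac:(by rewrite /cupd eqxx bl))
  (fun i _ (h : i != l) => ltac:(by rewrite /cupd /b (negbTE h))).
rewrite /F hk1 hk2 hz1 hz2 addnS dd_S bl !natrM mul1r.
have hz0 := Zc_neq0 b.
have bl1 : b l.+1 = a by rewrite /b eqxx e.
rewrite bl1; field; rewrite hz0 /= !n1 /= andbT pnatr_eq0; lia.
Qed.

Lemma termm N c :
  ((((m < m) ==> (0 < c m.+1)) * (m * (c m).+1))%N)%:R * F N (cupd c m) =
  ((N`!)%:R / (Zc c)%:R) * dd N (kc m c + m).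
Proof.
rewrite ltnn /=.
have [hk hz] := @upd_kZ m c (cupd c m) (ltac:(lia)) (ltac:(by rewrite /cupd eqxx))
  (fun i hi (h : i != m) => ltac:(by rewrite /cupd (negbTE h) (_ : (i == m.+1) = false) //;
                                     apply/eqP; lia)).
rewrite /F hk hz !natrM mul1r.
have hz0 := Zc_neq0 c.
field; rewrite hz0 /= ?n1 /= andbT pnatr_eq0; lia.
Qed.

Lemma alg_rec N c : F N.+1 c =
  (0 < c 1)%:R * F N (cdec1 c)
  + \sum_(1 <= l < m.+1) ((((l < m) ==> (0 < c l.+1)) * (l * (c l).+1))%N)%:R * F N (cupd c l)
  + (N - kc m c)%:R * F N c.
Proof.
rewrite big_nat_recr //= termm term0.
rewrite (eq_big_nat _ _ (fun l hl => terml N c hl)).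
rewrite -!big_distrl /= -natr_sum.
have hk : (c 1 + \sum_(1 <= l < m) l.+1 * c l.+1)%N = kc m c.
  by rewrite /kc big_nat_recl // mul1n.
have h := dd_rec N (kc m c).
rewrite -{2}hk natrD in h.
rewrite /F factS natrM.
set Q := (N`!)%:R / (Zc c)%:R.
set D := dd N.+1 (kc m c).
set S := (\sum_(1 <= l < m) l.+1 * c l.+1)%N.
have -> : (N.+1)%:R * (N`!)%:R / (Zc c)%:R * D = Q * ((N.+1)%:R * D) by rewrite /Q; ring.
rewrite /D h /Q /S; ring.
Qed.

End Alg.


Section Main.
Variable T : finType.
Variable m : nat.
Hypothesis m0 : (0 < m)%N.
Local Open Scope ring_scope.

Lemma pc_set0 s i : pc s (set0 : {set T}) i = 0%N.
Proof. by apply/eqP; rewrite cards_eq0; apply/eqP/setP => z; rewrite !inE. Qed.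

Lemma E_set0 c : (E m (set0 : {set T}) c)%:R = F m 0 c.
Proof.
rewrite /E (big_pred1 1%g); last first.
  move=> s; apply/idP/eqP => [h|->]; last exact: perm_on1.
  by apply: perm_on_id h _; rewrite cards0.
rewrite /ev /F fact0.
case: (boolP [forall i : 'I_m, c i.+1 == 0%N]) => [/forallP h|hn].
  have hc : forall i, (0 < i <= m)%N -> c i = 0%N.
    move=> i /andP[i0 im]; have im' : (i.-1 < m)%N by lia.
    by have := h (Ordinal im'); rewrite /= prednK // => /eqP.
  have -> : [forall i : 'I_m, pc (1%g : {perm T}) set0 i.+1 == (i.+1 * c i.+1)%N] by
    apply/forallP => i; rewrite pc_set0 (eqP (h i)) muln0.
  have -> : kc m c = 0%N by rewrite /kc big1_seq // => i /andP[_]; rewrite mem_index_iota => hi; rewrite hc ?muln0 //; lia.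
  have -> : Zc m c = 1%N by rewrite /Zc big1_seq // => i /andP[_]; rewrite mem_index_iota => hi; rewrite hc ?muln0 //; lia.
  by rewrite /dd /= d0 divr1 mulr1.
have [i hi] : exists i : 'I_m, c i.+1 != 0%N.
  by apply/existsP; rewrite -negb_forall.
have -> : [forall i : 'I_m, pc (1%g : {perm T}) set0 i.+1 == (i.+1 * c i.+1)%N] = false.
  apply/negbTE/forallP => /(_ i); rewrite pc_set0 eq_sym muln_eq0 /=; exact/negP.
have : (0 < kc m c)%N.
  have mem : (i.+1 \in index_iota 1 m.+1) by rewrite mem_index_iota; have := ltn_ord i; lia.
  rewrite /kc (bigD1_seq i.+1) ?iota_uniq //=; move: hi; rewrite -lt0n => hi; lia.
by rewrite /dd; case: (kc m c) => // k _; rewrite mulr0.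
Qed.

Lemma E_F N : forall (A : {set T}) c, #|A| = N -> (E m A c)%:R = F m N c.
Proof.
elim: N => [|N IH] A c hA.
  by move/cards0_eq: hA => ->; exact: E_set0.
have [x xA] : exists x, x \in A by apply/set0Pn; rewrite -card_gt0 hA.
have hA' : #|A :\ x| = N by move: hA; rewrite (cardsD1 x) xA add1n => -[].
rewrite (E_rec m0 c xA) !natrD !natrM natr_sum !IH // alg_rec //.
rewrite hA'; congr (_ + _ + _).
apply: eq_bigr => l _; rewrite natrM IH //.
Qed.

End Main.


Import Order.TTheory.

Section Bounds.
Variable m : nat.
Hypothesis m0 : (0 < m)%N.
Local Open Scope ring_scope.
Local Notation d := (d m).

Lemma d_small j : (0 < j <= m)%N -> d j = 0.
Proof.
elim: j => [|j IH] // hj.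
have h := d_rec m0 j; rewrite (_ : (m <= j)%N = false) in h; last by apply/negbTE; lia.
have e : j%:R * d j = 0.
  case: j IH hj h => [|j] IH hj h; first by rewrite mul0r.
  by rewrite IH ?mulr0 //; lia.
rewrite e addr0 in h; move/eqP: h; rewrite mulf_eq0 pnatr_eq0 orbF => /eqP //.
Qed.

Lemma d_mid M : (m < M <= 2 * m + 1)%N -> d M * M%:R = 1.
Proof.
elim: M => [|M IH] hM; first by exfalso; lia.
have h := d_rec m0 M; rewrite (_ : (m <= M)%N = true) in h; last by apply/idP; lia.
rewrite h; case: (eqVneq M m) => [->|ne].
  rewrite (@d_small m); last by lia.
  by rewrite mulr0 add0r subnn d0.
rewrite (@d_small (M - m)); last by lia.
by rewrite addr0 mulrC IH //; lia.
Qed.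

Lemma d_ge0 M : 0 <= d M.
Proof.
elim/ltn_ind: M => [[|M]] IH; first by rewrite d0.
have h := d_rec m0 M.
have hp : 0 < (M.+1)%:R :> rat by rewrite ltr0n.
have : 0 <= d M.+1 * (M.+1)%:R.
  rewrite h; apply: addr_ge0; first by rewrite mulr_ge0 ?ler0n ?IH.
  by case: ifP => // _; apply: IH; lia.
by rewrite pmulr_lge0.
Qed.

Lemma d_up M : d M * M%:R * (m.+1)%:R <= M%:R.
Proof.
elim/ltn_ind: M => [[|M]] IH; first by rewrite !mulr0 mul0r.
rewrite (d_rec m0).
have IHM := IH M (ltnSn M).
have dM := d_ge0 M.
have k0 : 0 < (m.+1)%:R :> rat by rewrite ltr0n.
case: ifP => hm; last first.
  rewrite addr0 [M%:R * _]mulrC; apply: le_trans IHM _; rewrite ler_nat; lia.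
case: (eqVneq M m) => [eM|ne].
  rewrite eM subnn d0 d_small //; last lia.
  by rewrite mulr0 add0r mul1r.
set j := (M - m)%N.
have hj : (0 < j < M.+1)%N by rewrite /j; lia.
have IHj := IH j (ltac:(case/andP: hj => _ ->)).
have j0 : 0 < j%:R :> rat by rewrite ltr0n; case/andP: hj.
have dj : d j * (m.+1)%:R <= 1.
  rewrite -(ler_pM2r j0) mul1r mulrAC; exact: IHj.
rewrite mulrDl [M%:R * _]mulrC -[(M.+1)%:R]natr1.
exact: lerD.
Qed.

Lemma d_low M : (m < M)%N -> (M.+1)%:R <= d M * M%:R * (2 * m + 2)%:R.
Proof.
elim/ltn_ind: M => M IH hM.
have K0 : 0 < (2 * m + 2)%:R :> rat by rewrite ltr0n; lia.
case: (leqP M (2 * m + 1)) => hM2.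
  rewrite d_mid ?mul1r ?ler_nat; lia.
case: M IH hM hM2 => [|M] IH hM hM2; first by exfalso; lia.
rewrite (d_rec m0) (_ : (m <= M)%N = true); last by apply/idP; lia.
have IHM := IH M (ltnSn M) (ltac:(lia)).
set j := (M - m)%N.
have hj : (j < M.+1)%N by rewrite /j; lia.
have IHj := IH j hj (ltac:(rewrite /j; lia)).
have j0 : 0 < j%:R :> rat by rewrite ltr0n /j; lia.
have dj : 1 <= d j * (2 * m + 2)%:R.
  rewrite -(ler_pM2r j0) mul1r mulrAC; apply: le_trans IHj; rewrite ler_nat; lia.
rewrite mulrDl [M%:R * _]mulrC -[(M.+2)%:R]natr1.
exact: lerD.
Qed.

End Bounds.


Lemma ncycles_pc n (s : {perm 'I_n}) i : (ncycles s i * i)%N = pc s setT i.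
Proof.
rewrite /ncycles /pc.
set P := [set C in porbits s | #|C| == i].
set D := [set z in [set: 'I_n] | #|porbit s z| == i].
have hP : partition P D.
  apply/and3P; split.
  - apply/eqP/setP => z; apply/bigcupP/idP.
      case=> C; rewrite !inE => /andP[/imsetP[w _ ->] hC] zC.
      have -> : porbit s z = porbit s w by apply/eqP; rewrite eq_porbit_mem.
      exact hC.
    move=> hz; exists (porbit s z); last exact: porbit_id.
    by rewrite !inE imset_f //=; move: hz; rewrite !inE.
  - apply/trivIsetP => A B; rewrite !inE => /andP[/imsetP[a _ ->] _] /andP[/imsetP[b _ ->] _] ne.
    apply/pred0P => z /=; apply/negP => /andP[za zb]; move/negP: ne; apply.
    have -> : porbit s a = porbit s z by apply/eqP; rewrite eq_porbit_mem porbit_sym.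
    by rewrite eq_porbit_mem.
  - apply/negP; rewrite !inE => /andP[/imsetP[w _ e] _].
    by have := porbit_id s w; rewrite -e inE.
rewrite (card_partition hP).
rewrite (eq_bigr (fun _ => i)); first by rewrite sum_nat_const.
by move=> C; rewrite !inE => /andP[_ /eqP].
Qed.

Unset Implicit Arguments.
Local Open Scope ring_scope.

Theorem proposition2p1 (n m : nat) (c : nat -> nat)
  (hm1 : (1 <= m)%N) (hmn : (m < n)%N)
  (hc : (\sum_(1 <= i < m.+1) i * c i <= n - m - 1)%N) :
  let Z : rat := (\prod_(1 <= i < m.+1) ((c i)`! * i ^ (c i)))%N%:R in
  1 / ((2 * m + 2)%N%:R * Z) <= unif_prob (cycle_event n m c)
  /\ unif_prob (cycle_event n m c) <= 1 / ((m + 1)%N%:R * Z).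
Proof.
move=> Z.
have hK : (kc m c <= n - m - 1)%N := hc.
have hZ : Z = (Zc m c)%:R by [].
have Z0 : 0 < Z by rewrite hZ ltr0n Zc_gt0.
set M := (n - kc m c)%N.
have hM : (m < M)%N by rewrite /M; lia.
have card_ev : #|cycle_event n m c| = E m [set: 'I_n] c.
  rewrite /E /cycle_event -sum1_card [LHS]big_mkcond /=.
  apply: eq_big => s; first by symmetry; apply/subsetP => x _; rewrite inE.
  move=> _; rewrite !inE; congr (nat_of_bool _); apply: eq_forallb => i.
  by rewrite -ncycles_pc mulnC eqn_mul2l.
have card_all : #|{perm 'I_n}| = n`!.
  have := card_perm [set: 'I_n]; rewrite cardsT card_ord => <-.
  apply: eq_card => s; by rewrite !inE; apply/esym/subsetP => x _; rewrite !inE.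
have hprob : unif_prob (cycle_event n m c) = d m M / Z.
  rewrite /unif_prob card_ev card_all (E_F hm1 c (_ : #|[set: 'I_n]| = n)); last first.
    by rewrite cardsT card_ord.
  rewrite /F /dd (_ : (kc m c <= n)%N = true); last by apply/idP; lia.
  rewrite -hZ -/M; field.
  by rewrite !pnatr_eq0 -!lt0n fact_gt0 andbT; exact: (Zc_gt0 m c).
have M0 : 0 < M%:R :> rat by rewrite ltr0n; lia.
have lowd : ((2 * m + 2)%:R)^-1 <= d m M.
  have K0 : 0 < (2 * m + 2)%:R :> rat by rewrite ltr0n; lia.
  rewrite -(ler_pM2r K0) mulVf ?gt_eqF //.
  rewrite -(ler_pM2r M0) mul1r mulrAC.
  apply: le_trans (d_low hm1 hM); rewrite ler_nat; lia.
have upd : d m M <= ((m + 1)%:R)^-1.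
  have K0 : 0 < (m + 1)%:R :> rat by rewrite ltr0n; lia.
  rewrite -(ler_pM2r K0) mulVf ?gt_eqF //.
  rewrite -(ler_pM2r M0) mul1r mulrAC addn1.
  exact: d_up hm1 M.
have Zi : 0 < Z^-1 by rewrite invr_gt0.
rewrite hprob !mul1r !invfM; split; rewrite ler_pM2r //.
Qed.
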